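(* Let $M\subseteq Seq(\mathbb{R})$ be a union of some of the blocks $A,B,C,D,E,F,G$. Then $M$ is a linear subspace of $Seq(\mathbb{R})$ (under pointwise addition and scalar multiplication) if and only if $M\in\{G,\ B\cup G,\ Seq(\mathbb{R})\}$. (Here $G$ is the space of convergent sequences and $B\cup G=\ell^\infty$ is the space of bounded sequences.)
   Context: $Seq(\mathbb{R})$ denotes the set of all real sequences $a=(a_n)_{n\ge1}$. For such $a$, $L_1(a):=\liminf_{n\to\infty}a_n$ and $L_2(a):=\limsup_{n\to\infty}a_n$, with values in $[-\infty,+\infty]$. The blocks are: $A=\{a: L_1(a)=-\infty,\ -\infty<L_2(a)<+\infty\}$; $B=\{a: -\infty<L_1(a)<L_2(a)<+\infty\}$; $C=\{a: -\infty<L_1(a)<L_2(a)=+\infty\}$; $D=\{a: L_1(a)=-\infty,\ L_2(a)=+\infty\}$; $E=\{a: L_1(a)=L_2(a)=-\infty\}$; $F=\{a: L_1(a)=L_2(a)=+\infty\}$; $G=\{a: -\infty<L_1(a)=L_2(a)<+\infty\}$ (i.e. the convergent sequences). These seven sets partition $Seq(\mathbb{R})$. *)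

(* Defs.v *)
From Stdlib Require Import Reals.
From Coquelicot Require Import Coquelicot.
Open Scope R_scope.

Definition Seq := nat -> R.

Definition L1 (a : Seq) : Rbar := LimInf_seq a.
Definition L2 (a : Seq) : Rbar := LimSup_seq a.

Inductive Block : Set := bA | bB | bC | bD | bE | bF | bG.

Definition in_block (b : Block) (a : Seq) : Prop :=
  match b with
  | bA => L1 a = m_infty /\ is_finite (L2 a)
  | bB => is_finite (L1 a) /\ is_finite (L2 a) /\ Rbar_lt (L1 a) (L2 a)
  | bC => is_finite (L1 a) /\ L2 a = p_infty
  | bD => L1 a = m_infty /\ L2 a = p_infty
  | bE => L1 a = m_infty /\ L2 a = m_infty
  | bF => L1 a = p_infty /\ L2 a = p_infty
  | bG => is_finite (L1 a) /\ is_finite (L2 a) /\ L1 a = L2 a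
  end.

Definition union_of (S : Block -> Prop) (a : Seq) : Prop :=
  exists b, S b /\ in_block b a.

Definition is_subspace (M : Seq -> Prop) : Prop :=
  M (fun _ => 0) /\
  (forall a b, M a -> M b -> M (fun n => a n + b n)) /\
  (forall (c : R) a, M a -> M (fun n => c * a n)).

Definition set_eq (M N : Seq -> Prop) : Prop := forall a, M a <-> N a.

(* Main.v *)
Require Import Defs.
From Stdlib Require Import Reals Lia Lra Classical FunctionalExtensionality.
From Coquelicot Require Import Coquelicot.
Open Scope R_scope.

Lemma L2_correct a : is_LimSup_seq a (L2 a).
Proof. exact (proj2_sig (ex_LimSup_seq a)). Qed.
Lemma L1_correct a : is_LimInf_seq a (L1 a).
Proof. exact (proj2_sig (ex_LimInf_seq a)). Qed.

Lemma L2p a : L2 a = p_infty <-> (forall M N, exists n, (N <= n)%nat /\ M < a n).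
Proof. split; intro H.
 - pose proof (L2_correct a) as C. rewrite H in C. exact C.
 - apply is_LimSup_seq_unique. exact H. Qed.
Lemma L2m a : L2 a = m_infty <-> (forall M, exists N, forall n, (N <= n)%nat -> a n < M).
Proof. split; intro H.
 - pose proof (L2_correct a) as C. rewrite H in C. exact C.
 - apply is_LimSup_seq_unique. exact H. Qed.
Lemma L1p a : L1 a = p_infty <-> (forall M, exists N, forall n, (N <= n)%nat -> M < a n).
Proof. split; intro H.
 - pose proof (L1_correct a) as C. rewrite H in C. exact C.
 - apply is_LimInf_seq_unique. exact H. Qed.
Lemma L1m a : L1 a = m_infty <-> (forall M N, exists n, (N <= n)%nat /\ a n < M).
Proof. split; intro H.
 - pose proof (L1_correct a) as C. rewrite H in C. exact C.
 - apply is_LimInf_seq_unique. exact H. Qed.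

Lemma L12 a : Rbar_le (L1 a) (L2 a).
Proof. apply LimSup_LimInf_seq_le. Qed.

Lemma block_unique b b' a : in_block b a -> in_block b' a -> b = b'.
Proof.
  pose proof (L12 a) as Hle.
  destruct b, b'; simpl; intros H1 H2; auto; revert Hle H1 H2;
  destruct (L1 a), (L2 a); unfold is_finite; simpl; intuition (try discriminate; try lra).
  all: match goal with H : Finite ?x = Finite ?y |- _ => assert (x = y) by congruence; lra end.
Qed.

Lemma block_exists a : exists b, in_block b a.
Proof.
  pose proof (L12 a) as Hle. revert Hle.
  destruct (L1 a) eqn:E1, (L2 a) eqn:E2; simpl; intro Hle; try contradiction.
  - destruct Hle as [Hlt| ->].
    + exists bB; simpl; rewrite E1, E2; unfold is_finite; simpl; auto.
    + exists bG; simpl; rewrite E1, E2; unfold is_finite; simpl; auto.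
  - exists bC; simpl; rewrite E1, E2; unfold is_finite; simpl; auto.
  - exists bF; simpl; rewrite E1, E2; auto.
  - exists bA; simpl; rewrite E1, E2; unfold is_finite; simpl; auto.
  - exists bD; simpl; rewrite E1, E2; auto.
  - exists bE; simpl; rewrite E1, E2; auto.
Qed.

Lemma L1_neg a : L1 (fun n => -1 * a n) = Rbar_opp (L2 a).
Proof.
  apply is_LimInf_seq_unique.
  apply is_LimInf_seq_ext with (u := fun n => - a n). { intro; ring. }
  apply is_LimInf_opp_LimSup_seq. apply L2_correct.
Qed.
Lemma L2_neg a : L2 (fun n => -1 * a n) = Rbar_opp (L1 a).
Proof.
  apply is_LimSup_seq_unique.
  apply is_LimSup_seq_ext with (u := fun n => - a n). { intro; ring. }
  apply is_LimSup_opp_LimInf_seq. apply L1_correct.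
Qed.

Lemma neg_AC a : in_block bA a -> in_block bC (fun n => -1 * a n).
Proof. simpl. rewrite L1_neg, L2_neg. destruct (L1 a), (L2 a); unfold is_finite; simpl;
  intuition discriminate. Qed.
Lemma neg_CA a : in_block bC a -> in_block bA (fun n => -1 * a n).
Proof. simpl. rewrite L1_neg, L2_neg. destruct (L1 a), (L2 a); unfold is_finite; simpl;
  intuition discriminate. Qed.

Lemma ev0 k : Nat.even (2*k) = true.
Proof. rewrite <- (Nat.add_0_l (2*k)), Nat.even_add_mul_2. reflexivity. Qed.
Lemma ev1 k : Nat.even (S (2*k)) = false.
Proof. change (S (2*k)) with (1 + 2*k)%nat. rewrite Nat.even_add_mul_2. reflexivity. Qed.

Lemma big M (N : nat) : exists n, (N <= n)%nat /\ M < INR n.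
Proof. destruct (INR_unbounded M) as [k Hk]. exists (N + k)%nat. split. lia.
  pose proof (le_INR k (N+k) ltac:(lia)). lra. Qed.

Lemma bigE M (N : nat) : exists k, (N <= 2*k)%nat /\ M < INR (2*k) /\ M < INR (S (2*k)).
Proof. destruct (INR_unbounded M) as [k Hk]. exists (N + k)%nat. split. lia.
  pose proof (le_INR k (2*(N+k)) ltac:(lia)). pose proof (le_INR k (S (2*(N+k))) ltac:(lia)). lra. Qed.

Lemma E_crit a : (forall n, a n <= - INR n) -> in_block bE a.
Proof. intro H. assert (H2 : L2 a = m_infty).
  { apply L2m. intro M. destruct (INR_unbounded (-M)) as [k Hk]. exists k. intros n Hn.
    pose proof (le_INR _ _ Hn). specialize (H n). lra. }
  simpl. split; auto. pose proof (L12 a) as Hl. rewrite H2 in Hl. destruct (L1 a); simpl in Hl; tauto. Qed.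

Lemma F_crit a : (forall n, INR n <= a n) -> in_block bF a.
Proof. intro H. assert (H2 : L1 a = p_infty).
  { apply L1p. intro M. destruct (INR_unbounded M) as [k Hk]. exists k. intros n Hn.
    pose proof (le_INR _ _ Hn). specialize (H n). lra. }
  simpl. split; auto. pose proof (L12 a) as Hl. rewrite H2 in Hl. destruct (L2 a); simpl in Hl; tauto. Qed.

Lemma D_crit a : ((forall k, INR (2*k) <= a (2*k)%nat) /\ (forall k, a (S (2*k)) <= - INR (S (2*k))))
  \/ ((forall k, a (2*k)%nat <= - INR (2*k)) /\ (forall k, INR (S (2*k)) <= a (S (2*k)))) ->
  in_block bD a.
Proof. intros H. simpl. split.
  - apply L1m. intros M N. destruct (bigE (-M) N) as [k [Hk1 [Hk2 Hk3]]].
    destruct H as [[_ H]|[H _]]; specialize (H k).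
    + exists (S (2*k)). split. lia. lra.
    + exists (2*k)%nat. split. lia. lra.
  - apply L2p. intros M N. destruct (bigE M N) as [k [Hk1 [Hk2 Hk3]]].
    destruct H as [[H _]|[_ H]]; specialize (H k).
    + exists (2*k)%nat. split. lia. lra.
    + exists (S (2*k)). split. lia. lra.
Qed.

Definition wA (n : nat) : R := if Nat.even n then - INR n else 0.
Definition wA' (n : nat) : R := if Nat.even n then 0 else - INR n.

Lemma wA_A : in_block bA wA.
Proof. simpl. split.
  - apply L1m. intros M N. destruct (bigE (-M) N) as [k [Hk1 [Hk2 Hk3]]].
    exists (2*k)%nat. split. lia. unfold wA. rewrite ev0. lra.
  - destruct (L2 wA) eqn:E; unfold is_finite; simpl; auto; exfalso.
    + destruct ((proj1 (L2p _)) E 0%R 0%nat) as [n [_ Hn]]. unfold wA in Hn.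
      destruct (Nat.even n); pose proof (pos_INR n); lra.
    + destruct ((proj1 (L2m _)) E (-1)) as [N HN]. specialize (HN (S (2*N)) ltac:(lia)).
      unfold wA in HN. rewrite ev1 in HN. lra.
Qed.
Lemma wA'_A : in_block bA wA'.
Proof. simpl. split.
  - apply L1m. intros M N. destruct (bigE (-M) N) as [k [Hk1 [Hk2 Hk3]]].
    exists (S (2*k)). split. lia. unfold wA'. rewrite ev1. lra.
  - destruct (L2 wA') eqn:E; unfold is_finite; simpl; auto; exfalso.
    + destruct ((proj1 (L2p _)) E 0%R 0%nat) as [n [_ Hn]]. unfold wA' in Hn.
      destruct (Nat.even n); pose proof (pos_INR n); lra.
    + destruct ((proj1 (L2m _)) E (-1)) as [N HN]. specialize (HN (2*N)%nat ltac:(lia)).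
      unfold wA' in HN. rewrite ev0 in HN. lra.
Qed.

Lemma G_char a : in_block bG a <-> exists l : R, is_lim_seq a l.
Proof. simpl. split.
  - intros [H1 [H2 H3]]. exists (real (L2 a)). rewrite H2.
    apply is_LimSup_LimInf_lim_seq. apply L2_correct. rewrite <- H3. apply L1_correct.
  - intros [l Hl]. unfold L2. rewrite (is_LimSup_seq_unique _ _ (is_lim_LimSup_seq _ _ Hl)).
    unfold L1. rewrite (is_LimInf_seq_unique _ _ (is_lim_LimInf_seq _ _ Hl)).
    unfold is_finite; simpl; auto.
Qed.

Definition EB (a : Seq) := exists M N, forall n, (N <= n)%nat -> Rabs (a n) <= M.

Lemma BG_char a : (in_block bB a \/ in_block bG a) <-> EB a.
Proof. split.
  - intro H. assert (F : is_finite (L1 a) /\ is_finite (L2 a)) by (simpl in H; tauto).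
    destruct F as [F1 F2].
    pose proof (L1_correct a) as C1. pose proof (L2_correct a) as C2.
    rewrite <- F1 in C1. rewrite <- F2 in C2. simpl in C1, C2.
    destruct (C1 (mkposreal 1 Rlt_0_1)) as [_ [N1 H1]].
    destruct (C2 (mkposreal 1 Rlt_0_1)) as [_ [N2 H2]]. simpl in *.
    exists (Rabs (real (L1 a)) + Rabs (real (L2 a)) + 1), (N1 + N2)%nat.
    intros n Hn. specialize (H1 n ltac:(lia)). specialize (H2 n ltac:(lia)).
    pose proof (Rle_abs (real (L2 a))). pose proof (Rle_abs (- real (L1 a))).
    rewrite Rabs_Ropp in *. pose proof (Rabs_pos (real (L1 a))). pose proof (Rabs_pos (real (L2 a))).
    apply Rabs_le. lra.
  - intros [M [N H]].
    assert (F2 : is_finite (L2 a)).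
    { destruct (L2 a) eqn:E; unfold is_finite; simpl; auto; exfalso.
      + destruct ((proj1 (L2p _)) E M N) as [n [Hn Hn']]. specialize (H n Hn).
        pose proof (Rle_abs (a n)). lra.
      + destruct ((proj1 (L2m _)) E (-M)) as [N' HN]. specialize (HN (N + N')%nat ltac:(lia)).
        specialize (H (N+N')%nat ltac:(lia)). apply Rabs_le_between in H. lra. }
    assert (F1 : is_finite (L1 a)).
    { destruct (L1 a) eqn:E; unfold is_finite; simpl; auto; exfalso.
      + destruct ((proj1 (L1p _)) E M) as [N' HN]. specialize (HN (N + N')%nat ltac:(lia)).
        specialize (H (N+N')%nat ltac:(lia)). apply Rabs_le_between in H. lra.
      + destruct ((proj1 (L1m _)) E (-M) N) as [n [Hn Hn']]. specialize (H n Hn).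
        apply Rabs_le_between in H. lra. }
    pose proof (L12 a) as Hle. simpl.
    revert F1 F2 Hle. destruct (L1 a), (L2 a); unfold is_finite; simpl; intros F1 F2 Hle;
      try discriminate.
    destruct Hle as [Hlt | ->]; [left | right]; auto.
Qed.

Lemma subspace_ext M N : set_eq M N -> is_subspace N -> is_subspace M.
Proof. intros E [H0 [H1 H2]]. split; [|split].
  - apply E; auto.
  - intros a b Ha Hb. apply E. apply H1; apply E; auto.
  - intros c a Ha. apply E. apply H2; apply E; auto.
Qed.

Lemma G_sub : is_subspace (in_block bG).
Proof. split; [|split].
  - apply G_char. exists 0. apply is_lim_seq_const.
  - intros a b Ha Hb. apply G_char in Ha as [l1 H1]. apply G_char in Hb as [l2 H2].
    apply G_char. exists (l1 + l2). apply is_lim_seq_plus'; auto.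
  - intros c a Ha. apply G_char in Ha as [l1 H1]. apply G_char. exists (c * l1).
    exact (is_lim_seq_scal_l _ c _ H1).
Qed.

Lemma BG_sub : is_subspace (fun a => in_block bB a \/ in_block bG a).
Proof. split; [|split].
  - apply BG_char. exists 0, 0%nat. intros. rewrite Rabs_R0. lra.
  - intros a b Ha Hb. apply BG_char in Ha as [M1 [N1 H1]]. apply BG_char in Hb as [M2 [N2 H2]].
    apply BG_char. exists (M1 + M2), (N1 + N2)%nat. intros n Hn.
    specialize (H1 n ltac:(lia)). specialize (H2 n ltac:(lia)).
    pose proof (Rabs_triang (a n) (b n)). lra.
  - intros c a Ha. apply BG_char in Ha as [M1 [N1 H1]]. apply BG_char.
    exists (Rabs c * M1), N1. intros n Hn. rewrite Rabs_mult.
    apply Rmult_le_compat_l. apply Rabs_pos. auto.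
Qed.

Lemma zero_G : in_block bG (fun _ => 0).
Proof. apply G_char. exists 0. apply is_lim_seq_const. Qed.

Theorem theorem3p5 (S : Block -> Prop) :
  is_subspace (union_of S) <->
  (set_eq (union_of S) (in_block bG)
   \/ set_eq (union_of S) (fun a => in_block bB a \/ in_block bG a)
   \/ set_eq (union_of S) (fun _ => True)).
Proof.
  split.
  - intros [H0 [Hadd Hsc]].
    assert (inU : forall b a, S b -> in_block b a -> union_of S a) by (intros b a Sb Hb; exists b; auto).
    assert (getS : forall b a, in_block b a -> union_of S a -> S b).
    { intros b a Hb [b' [Sb' Hb']]. rewrite (block_unique _ _ _ Hb Hb'). auto. }
    assert (SG : S bG) by (apply (getS _ _ zero_G H0)).
    assert (SE : S bE -> forall x, union_of S x).
    { intros SE x.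
      set (u := fun n => x n - Rabs (x n) - INR n). set (v := fun n => - Rabs (x n) - INR n).
      replace x with (fun n => u n + -1 * v n).
      2:{ apply functional_extensionality; intro n; unfold u, v; ring. }
      apply Hadd; [|apply Hsc]; apply (inU bE); auto; apply E_crit; intro n; unfold u, v;
        pose proof (Rle_abs (x n)); pose proof (Rabs_pos (x n)); lra. }
    assert (SF : S bF -> forall x, union_of S x).
    { intros SF x.
      set (u := fun n => x n + Rabs (x n) + INR n). set (v := fun n => Rabs (x n) + INR n).
      replace x with (fun n => u n + -1 * v n).
      2:{ apply functional_extensionality; intro n; unfold u, v; ring. }
      apply Hadd; [|apply Hsc]; apply (inU bF); auto; apply F_crit; intro n; unfold u, v;
        pose proof (Rle_abs (- x n)); rewrite Rabs_Ropp in *; pose proof (Rabs_pos (x n)); lra. }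
    assert (SD : S bD -> forall x, union_of S x).
    { intros SD x.
      set (w := fun n => if Nat.even n then Rabs (x n) + INR n else - (Rabs (x n) + INR n)).
      replace x with (fun n => (x n + w n) + -1 * w n).
      2:{ apply functional_extensionality; intro n; ring. }
      pose proof (fun n => Rle_abs (x n)). pose proof (fun n => Rle_abs (- x n)).
      setoid_rewrite Rabs_Ropp in H1.
      apply Hadd; [|apply Hsc]; apply (inU bD); auto; apply D_crit; unfold w.
      - left; split; intro k; rewrite ?ev0, ?ev1; pose proof (H (2*k)%nat); pose proof (H1 (2*k)%nat);
          pose proof (H (Datatypes.S (2*k))); pose proof (H1 (Datatypes.S (2*k))); lra.
      - left; split; intro k; rewrite ?ev0, ?ev1; pose proof (H (2*k)%nat); pose proof (H1 (2*k)%nat);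
          pose proof (H (Datatypes.S (2*k))); pose proof (H1 (Datatypes.S (2*k))); lra. }
    assert (SA : S bA -> S bD).
    { intros SA. apply (getS bD (fun n => wA n + -1 * wA' n)).
      - apply D_crit. right. unfold wA, wA'. split; intro k; rewrite ?ev0, ?ev1; lra.
      - apply Hadd; [|apply Hsc]; apply (inU bA); auto using wA_A, wA'_A. }
    assert (SC : S bC -> S bA).
    { intros SC. apply (getS bA (fun n => -1 * (-1 * wA n))).
      - apply neg_CA, neg_AC, wA_A.
      - apply Hsc, (inU bC); auto. apply neg_AC, wA_A. }
    destruct (classic (S bA \/ S bC \/ S bD \/ S bE \/ S bF)) as [Hy|Hn].
    + right; right. intro a; split; auto. intros _.
      destruct Hy as [h|[h|[h|[h|h]]]]; auto.
    + destruct (classic (S bB)) as [SB|SB]; [right; left|left]; intro a; split.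
      * intros [b [Sb Hb]]. destruct b; try tauto.
      * intros [h|h]; eauto.
      * intros [b [Sb Hb]]. destruct b; try tauto.
      * eauto.
  - intros [E|[E|E]]; eapply subspace_ext; try exact E.
    + exact G_sub.
    + exact BG_sub.
    + split; [|split]; auto.
Qed.
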